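(* Let $\mathcal{T}$ be a triangulation of $C(m,2d+1)$, $v\in[m]$, and let $S,R$ be $2d$-simplices of $\mathcal{T}\backslash v$ (with $S\cap R$ of size $2d$). Then $S\cap R$ cannot be both a lower facet of $S$ and a lower facet of $R$; similarly $S\cap R$ cannot be both an upper facet of $S$ and an upper facet of $R$.
   Context: $C(V,n)$ is the cyclic polytope on a finite ordered set $V$ (convex hull of $(t_v,\dots,t_v^n)$, $t_v$ increasing); $C(m,n)=C([m],n)$; a triangulation of it is a set of $(n+1)$-subsets whose geometric simplices form a simplicial complex covering it. For a triangulation $\mathcal{T}$ of $C(m,2d+1)$ and $v\in[m]$, $\mathcal{T}\backslash v=\{S\setminus\{v\}: S\in\mathcal{T},\ v\in S\}$, a set of $2d$-simplices ($(2d+1)$-subsets of $[m]\setminus\{v\}$). Let $[m]_{v+}=\{1,\dots,v-1,x,y,v+1,\dots,m\}$ ordered with $v-1<x<y<v+1$. The circuits of $C(V,2d+1)$ are the pairs $(Z,Z')$ of disjoint subsets with, after listing $Z\cup Z'$ increasingly as $c_0<c_1<\dots<c_{2d+2}$, one of $Z,Z'$ equal to $\{c_1,c_3,\dots,c_{2d+1}\}$ and the other to $\{c_0,c_2,\dots,c_{2d+2}\}$. For a $2d$-simplex $S$ of $\mathcal{T}\backslash v$, the set $S\cup\{x,y\}$ has $2d+3$ elements and so splits uniquely into the two halves of a circuit of $C([m]_{v+},2d+1)$; since $x,y$ are adjacent they lie in different halves, and we write these halves as $S_-\cup\{x\}$ and $S_+\cup\{y\}$ with $S=S_-\sqcup S_+$.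 For $s\in S$, $S\setminus\{s\}$ is a lower facet of $S$ if $s\in S_+$ and an upper facet of $S$ if $s\in S_-$. *)

(* Defs.v *)
From mathcomp Require Import all_boot all_order all_algebra.
Set Implicit Arguments. Unset Strict Implicit. Unset Printing Implicit Defensive.
Import Order.TTheory GRing.Theory Num.Theory.
Local Open Scope ring_scope.

(* Vertices of C(m, 2d+1) are the elements of 'I_m (vertex i stands for the
   paper's vertex i+1), with parameters t : 'I_m -> R strictly increasing. *)

Section Cyclic.
Variables (R : realFieldType) (d m : nat) (t : 'I_m -> R).

Definition mpoint (u : 'I_m) : 'rV[R]_(2 * d).+1 :=
  \row_(i < (2 * d).+1) (t u) ^+ i.+1.

Definition in_conv (A : {set 'I_m}) (x : 'rV[R]_(2 * d).+1) : Prop :=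
  exists lam : 'I_m -> R,
    [/\ forall i, 0 <= lam i,
        forall i, i \notin A -> lam i = 0,
        \sum_i lam i = 1
      & x = \sum_i lam i *: mpoint i].

(* T is a triangulation of C(m, 2d+1): its elements are (2d+2)-subsets whose
   geometric simplices pairwise intersect in a common face (simplicial
   complex) and whose union is the whole polytope. *)
Definition triangulation (T : {set {set 'I_m}}) : Prop :=
  [/\ forall S, S \in T -> #|S| = (2 * d).+2,
      forall S S', S \in T -> S' \in T -> forall x,
        (in_conv S x /\ in_conv S' x) <-> in_conv (S :&: S') x
    & forall x, in_conv [set: 'I_m] x <-> exists2 S, S \in T & in_conv S x].
End Cyclic.

Section Link.
Variable m : nat.

Definition link (T : {set {set 'I_m}}) (v : 'I_m) : {set {set 'I_m}} :=
  [set S :\ v | S in [set S in T | v \in S]].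

(* The ordered set [m]_{v+} embedded order-preservingly into nat:
   u <> v  |->  2u+2,   x |-> 2v+1,   y |-> 2v+3. *)
Definition key (u : 'I_m) : nat := (2 * u + 2)%N.
Definition xkey (v : 'I_m) : nat := (2 * v + 1)%N.
Definition ykey (v : 'I_m) : nat := (2 * v + 3)%N.

Definition ext (v : 'I_m) (S : {set 'I_m}) : seq nat :=
  xkey v :: ykey v :: [seq key u | u <- enum S].

Definition rnk (v : 'I_m) (S : {set 'I_m}) (z : nat) : nat :=
  count (fun w => (w < z)%N) (ext v S).

(* The circuit halves of S ∪ {x,y} are its even- and odd-indexed elements;
   S_- ∪ {x} is the half containing x, S_+ ∪ {y} the half containing y. *)
Definition Sminus (v : 'I_m) (S : {set 'I_m}) : {set 'I_m} :=
  [set s in S | odd (rnk v S (key s)) == odd (rnk v S (xkey v))].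
Definition Splus (v : 'I_m) (S : {set 'I_m}) : {set 'I_m} :=
  [set s in S | odd (rnk v S (key s)) == odd (rnk v S (ykey v))].

Definition lower_facet (v : 'I_m) (S F : {set 'I_m}) : Prop :=
  exists2 s, s \in Splus v S & F = S :\ s.
Definition upper_facet (v : 'I_m) (S F : {set 'I_m}) : Prop :=
  exists2 s, s \in Sminus v S & F = S :\ s.
End Link.

(* Main.v *)
Require Import Defs.
From mathcomp Require Import all_boot all_order all_algebra.
From mathcomp Require Import zify ring lra.
Import Order.TTheory GRing.Theory Num.Theory.
Local Open Scope ring_scope.

Section Poly.
Variables (K : realFieldType) (m : nat) (t : 'I_m -> K).
Hypothesis tinj : injective t.

Lemma sum_poly (c : 'I_m -> K) n (p : {poly K}) :
  (forall k, (k < n)%N -> \sum_i c i * t i ^+ k = 0) -> (size p <= n)%N ->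
  \sum_i c i * p.[t i] = 0.
Proof.
move=> H hp.
under eq_bigr => i _ do rewrite horner_coef big_distrr /=.
rewrite exchange_big /= big1 // => k _.
under eq_bigr => i _ do rewrite mulrCA.
by rewrite -big_distrr /= H ?mulr0 //; apply: leq_trans (ltn_ord k) hp.
Qed.

Lemma prodX_horner (A : {set 'I_m}) a :
  (\prod_(x <- [seq t j | j <- enum A]) ('X - x%:P)).[a] = \prod_(j in A) (a - t j).
Proof.
rewrite horner_prod big_map big_enum /=; apply: eq_bigr => j _.
by rewrite hornerXsubC.
Qed.

Lemma prod_sub_neq0 (A : {set 'I_m}) i : i \notin A -> \prod_(j in A) (t i - t j) != 0.
Proof.
move=> hi; apply/prodf_neq0 => j hj; rewrite subr_eq0; apply/eqP => /tinj E.
by rewrite E hj in hi.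
Qed.

Lemma affine_indep (A : {set 'I_m}) (c : 'I_m -> K) n :
  (forall i, i \notin A -> c i = 0) -> (#|A| <= n)%N ->
  (forall k, (k < n)%N -> \sum_i c i * t i ^+ k = 0) -> forall i, i \in A -> c i = 0.
Proof.
move=> c0 hA H i0 hi0.
pose p := \prod_(x <- [seq t j | j <- enum (A :\ i0)]) ('X - x%:P).
have hp : (size p <= n)%N.
  rewrite size_prod_XsubC size_map -cardE.
  by rewrite (cardsD1 i0 A) hi0 in hA.
have := sum_poly _ _ _ H hp; rewrite (bigD1 i0) //= big1 ?addr0.
- move/eqP; rewrite /p prodX_horner mulf_eq0 => /orP[/eqP //|].
  by rewrite (negbTE (prod_sub_neq0 _ _ _)) // !inE eqxx.
- move=> i hi; case: (boolP (i \in A)) => hiA.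
    rewrite /p prodX_horner (bigD1 i) /= ?subrr ?mul0r ?mulr0 //.
    by rewrite !inE hi hiA.
  by rewrite c0 // mul0r.
Qed.

Definition lam (U : {set 'I_m}) i :=
  if i \in U then (\prod_(j in U :\ i) (t i - t j))^-1 else 0.

Lemma divdiff (U : {set 'I_m}) k : (k.+2 <= #|U|)%N -> \sum_i lam U i * t i ^+ k = 0.
Proof.
move=> hk.
pose P i := \prod_(x <- [seq t j | j <- enum (U :\ i)]) ('X - x%:P).
have sizeP i : i \in U -> size (P i) = #|U|.
  by move=> hi; rewrite size_prod_XsubC size_map -cardE (cardsD1 i U) hi.
pose L := \sum_(i in U) (lam U i * t i ^+ k) *: P i.
have hL : L = 'X^k.
  apply/eqP; rewrite -subr_eq0; apply/negPn/negP => hne.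
  have := max_poly_roots (rs := [seq t j | j <- enum U]) hne.
  have -> : all (root (L - 'X^k)) [seq t j | j <- enum U].
    apply/allP => _ /mapP[j hj ->]; rewrite mem_enum in hj.
    rewrite /root hornerD hornerN hornerXn /L horner_sum (bigD1 j) //= big1 ?addr0.
      rewrite hornerZ /P prodX_horner /lam hj mulrAC mulVf ?mul1r ?subrr //.
      by apply: prod_sub_neq0; rewrite !inE eqxx.
    move=> i /andP[hi hij]; rewrite hornerZ /P prodX_horner (bigD1 j) /=.
      by rewrite subrr mul0r mulr0.
    by rewrite !inE eq_sym hij hj.
  rewrite map_inj_uniq ?enum_uniq // size_map -cardE => /(_ isT isT).
  apply/negP; rewrite -leqNgt.
  apply: leq_trans (size_add _ _) _; rewrite size_opp size_polyXn geq_max.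
  apply/andP; split; last by apply: leq_trans hk; rewrite ltnW.
  rewrite /L; apply: (big_ind (fun q : {poly K} => (size q <= #|U|)%N)).
  - by rewrite size_poly0.
  - by move=> p q hp hq; apply: leq_trans (size_add _ _) _; rewrite geq_max hp hq.
  - by move=> i hi; apply: leq_trans (size_scale_leq _ _) _; rewrite sizeP.
have := congr1 (fun q : {poly K} => q`_(#|U|.-1)) hL.
rewrite /= coefXn.
have -> : (#|U|.-1 == k) = false by apply/eqP; lia.
rewrite /L coef_sum => E.
rewrite -[RHS]E [RHS]big_mkcond /=; apply: eq_bigr => i _.
rewrite /lam; case: ifP => hi; last by rewrite mul0r.
rewrite coefZ -(sizeP i hi) -lead_coefE.
by have /monicP -> := monic_prod_XsubC [seq t j | j <- enum (U :\ i)] xpredT id; rewrite mulr1.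
Qed.

Lemma sum_mpoint d (f : 'I_m -> K) (j : 'I_(2 * d).+1) :
  (\sum_k f k *: mpoint d t k) 0 j = \sum_k f k * t k ^+ j.+1.
Proof. by rewrite summxE; apply: eq_bigr => k _; rewrite !mxE. Qed.

Lemma radon d (T : {set {set 'I_m}}) (hT : triangulation d t T) (A B : {set 'I_m})
  (hA : A \in T) (hB : B \in T) (l : 'I_m -> K) s :
  (forall i, 0 < l i -> i \in A) -> (forall i, l i < 0 -> i \in B) ->
  (forall k, (k < (2 * d).+2)%N -> \sum_i l i * t i ^+ k = 0) ->
  s \notin B -> 0 < l s -> False.
Proof.
move=> hpos hneg hsum hsB hls.
case: hT => hcard hint _.
pose mu i := if 0 < l i then l i else 0.
pose nu i := if l i < 0 then - l i else 0.
have lE i : l i = mu i - nu i.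
  rewrite /mu /nu; case: (ltrgtP (l i) 0) => h.
  by rewrite sub0r opprK. by rewrite subr0. by rewrite h subrr.
have mu0 i : 0 <= mu i by rewrite /mu; case: ifP => // /ltW.
have nu0 i : 0 <= nu i by rewrite /nu; case: ifP => // h; rewrite oppr_ge0 ltW.
have Hk k : (k < (2 * d).+2)%N -> \sum_i mu i * t i ^+ k = \sum_i nu i * t i ^+ k.
  move=> hk; have := hsum k hk; under eq_bigr do rewrite lE mulrBl.
  by rewrite sumrB => /eqP; rewrite subr_eq0 => /eqP.
set Lam := \sum_i mu i.
have LamP : 0 < Lam.
  rewrite /Lam (bigD1 s) //= ltr_pwDl //; last by apply: sumr_ge0.
  by rewrite /mu hls.
have nuS : \sum_i nu i = Lam.
  have := Hk 0%N isT; under eq_bigr => i _ do rewrite expr0 mulr1.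
  by under [X in _ = X]eq_bigr => i _ do rewrite expr0 mulr1; move=> <-.
have LamV : Lam^-1 * Lam = 1 by rewrite mulVf // gt_eqF.
pose x : 'rV[K]_(2 * d).+1 := \sum_i (mu i / Lam) *: mpoint d t i.
have xnu : x = \sum_i (nu i / Lam) *: mpoint d t i.
  apply/rowP => j; rewrite !summxE; under eq_bigr do rewrite !mxE.
  under [RHS]eq_bigr do rewrite !mxE.
  have e1 (f : 'I_m -> K) : \sum_i f i / Lam * t i ^+ j.+1 = (\sum_i f i * t i ^+ j.+1) / Lam.
    by rewrite big_distrl; apply: eq_bigr => i _; rewrite mulrAC.
  by rewrite (e1 mu) (e1 nu) (Hk j.+1 (ltn_ord j)).
have cA : in_conv t A x.
  exists (fun i => mu i / Lam); split => //.
  - by move=> i; rewrite divr_ge0 // ltW.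
  - move=> i hi; rewrite /mu; case: ifP => h; last by rewrite mul0r.
    by rewrite (hpos _ h) in hi.
  - by rewrite -big_distrl /= mulfV // gt_eqF.
have cB : in_conv t B x.
  exists (fun i => nu i / Lam); split => //.
  - by move=> i; rewrite divr_ge0 // ltW.
  - move=> i hi; rewrite /nu; case: ifP => h; last by rewrite mul0r.
    by rewrite (hneg _ h) in hi.
  - by rewrite -big_distrl /= nuS mulfV // gt_eqF.
have [kap [k0 kout k1 xk]] := (hint A B hA hB x).1 (conj cA cB).
pose c i := mu i / Lam - kap i.
have hsA : s \in A by apply: hpos.
have hcs : c s = 0.
  apply: (affine_indep A c (2 * d).+2) => //.
  - move=> i hi; rewrite /c kout; last by rewrite inE (negbTE hi).
    rewrite /mu; case: ifP => h; last by rewrite mul0r subr0.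
    by rewrite (hpos _ h) in hi.
  - by rewrite hcard.
  - case=> [|j] hj.
      under eq_bigr => i _ do rewrite expr0 mulr1.
      by rewrite /c sumrB -big_distrl /= k1 mulfV ?subrr // gt_eqF.
    have := congr1 (fun y : 'rV[K]_(2 * d).+1 => y 0 (Ordinal (hj : (j < (2 * d).+1)%N))) xk.
    rewrite /x /= !sum_mpoint => E; rewrite /c; under eq_bigr => i _ do rewrite mulrBl.
    by rewrite sumrB E subrr.
move: hcs; rewrite /c kout; last by rewrite inE (negbTE hsB) andbF.
by rewrite subr0; move/eqP; rewrite mulf_eq0 invr_eq0 (gt_eqF LamP) orbF /mu hls (gt_eqF hls).
Qed.
Lemma prod_sign (A : {set 'I_m}) (f : 'I_m -> K) : (forall i, i \in A -> f i != 0) ->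
  0 < (-1) ^+ (\sum_(i in A) nat_of_bool (f i < 0)%R)%N * \prod_(i in A) f i.
Proof.
move=> hf.
have -> : \prod_(i in A) f i = \prod_(i in A) ((-1) ^+ nat_of_bool (f i < 0) * `|f i|).
  apply: eq_bigr => i hi; case: (ltrP (f i) 0) => h /=.
    by rewrite expr1 mulN1r ltr0_norm ?opprK.
  by rewrite expr0 mul1r ger0_norm.
rewrite big_split /= prodrXr mulrA -exprD addnn -mul2n exprM sqrrN expr1n expr1n mul1r.
by apply: prodr_gt0 => i hi; rewrite normr_gt0 hf.
Qed.

Lemma key_geom d (T : {set {set 'I_m}}) (hT : triangulation d t T) (F : {set 'I_m}) (s r v : 'I_m) :
  (v |: (s |: F)) \in T -> (v |: (r |: F)) \in T ->
  s \notin F -> r \notin F -> v \notin F -> s != r -> s != v -> r != v ->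
  0 < (\prod_(j in v |: F) (t s - t j)) * (\prod_(j in v |: F) (t r - t j)) -> False.
Proof.
move=> hA hB hsF hrF hvF hsr hsv hrv hQ.
set A := v |: (s |: F) in hA *; set B := v |: (r |: F) in hB *.
set U := A :|: B.
have facts := (eqxx, negbTE hsF, negbTE hrF, negbTE hvF, negbTE hsr, negbTE hsv, negbTE hrv,
   (eq_sym r s), (eq_sym v s), (eq_sym v r), orbT, orbF, andbT, andbF).
have Us : U :\ s = r |: (v |: F).
  apply/setP => i; rewrite !inE; have [->|his] := eqVneq i s; first by rewrite ?facts.
  rewrite ?(negbTE his); have [->|hir] := eqVneq i r; first by rewrite ?facts.
  rewrite ?(negbTE hir); have [->|hiv] := eqVneq i v; first by rewrite ?facts.
  by rewrite ?(negbTE hiv) /=; case: (i \in F).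
have Ur : U :\ r = s |: (v |: F).
  apply/setP => i; rewrite !inE; have [->|his] := eqVneq i s; first by rewrite ?facts.
  rewrite ?(negbTE his); have [->|hir] := eqVneq i r; first by rewrite ?facts.
  rewrite ?(negbTE hir); have [->|hiv] := eqVneq i v; first by rewrite ?facts.
  by rewrite ?(negbTE hiv) /=; case: (i \in F).
have UA i : i \in U -> i != r -> i \in A.
  rewrite !inE; have [->|his] := eqVneq i s; first by rewrite ?facts.
  rewrite ?(negbTE his); have [->|hir] := eqVneq i r; first by rewrite ?facts.
  rewrite ?(negbTE hir); have [->|hiv] := eqVneq i v; first by rewrite ?facts.
  by rewrite ?(negbTE hiv) /=; case: (i \in F).
have UB i : i \in U -> i != s -> i \in B.
  rewrite !inE; have [->|his] := eqVneq i s; first by rewrite ?facts.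
  rewrite ?(negbTE his); have [->|hir] := eqVneq i r; first by rewrite ?facts.
  rewrite ?(negbTE hir); have [->|hiv] := eqVneq i v; first by rewrite ?facts.
  by rewrite ?(negbTE hiv) /=; case: (i \in F).
have sU : s \in U by rewrite !inE ?facts.
have rU : r \in U by rewrite !inE ?facts.
have sB : s \notin B by rewrite !inE ?facts.
have rA : r \notin A by rewrite !inE ?facts.
case: (hT) => hcard _ _.
have cardU : ((2 * d).+3 <= #|U|)%N.
  have : #|r |: A| = (2 * d).+3 by rewrite cardsU1 rA hcard.
  move <-; apply: subset_leq_card; apply/subsetP => i; rewrite in_setU1.
  by case/orP => [/eqP -> //|h]; rewrite /U in_setU h.
have hsum k : (k < (2 * d).+2)%N -> \sum_i lam U i * t i ^+ k = 0.
  by move=> hk; apply: divdiff; apply: leq_trans cardU.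
have supp i : lam U i != 0 -> i \in U.
  by rewrite /lam; case: ifP => // _; rewrite eqxx.
have ls : lam U s = ((t s - t r) * \prod_(j in v |: F) (t s - t j))^-1.
  rewrite /lam sU Us big_setU1 //= !inE ?facts //.
have lr : lam U r = ((t r - t s) * \prod_(j in v |: F) (t r - t j))^-1.
  rewrite /lam rU Ur big_setU1 //= !inE ?facts //.
have neg : lam U s * lam U r < 0.
  rewrite ls lr -invfM invr_lt0.
  have -> : (t s - t r) * \prod_(j in v |: F) (t s - t j) *
      ((t r - t s) * \prod_(j in v |: F) (t r - t j)) =
      - ((t s - t r) ^+ 2 * ((\prod_(j in v |: F) (t s - t j)) * (\prod_(j in v |: F) (t r - t j)))).
    by ring.
  rewrite oppr_lt0 mulr_gt0 // exprn_even_gt0 //= subr_eq0.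
  by apply/eqP => /tinj /eqP; rewrite (negbTE hsr).
have gen (A' B' : {set 'I_m}) a b : A' \in T -> B' \in T ->
    (forall i, i \in U -> i != b -> i \in A') -> (forall i, i \in U -> i != a -> i \in B') ->
    a \notin B' -> 0 < lam U a -> lam U b < 0 -> False.
  move=> hA' hB' hUA hUB haB la lb.
  apply: (@radon _ _ hT _ _ hA' hB' (lam U) a) => //.
  - move=> i hi; apply: hUA; first by apply: supp; rewrite gt_eqF.
    by apply/eqP => eib; move: hi; rewrite eib => /(lt_trans lb); rewrite ltxx.
  - move=> i hi; apply: hUB; first by apply: supp; rewrite lt_eqF.
    by apply/eqP => eia; move: hi; rewrite eia => /lt_trans /(_ la); rewrite ltxx.
case: (ltrgtP (lam U s) 0) => hls.
- apply: (gen B A r s) => //.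
  by move: neg; rewrite nmulr_rlt0.
- apply: (gen A B s r) => //.
  by move: neg; rewrite pmulr_rlt0.
- by move: neg; rewrite hls mul0r ltxx.
Qed.
End Poly.

Set Implicit Arguments. Unset Strict Implicit.
Import Order.TTheory GRing.Theory Num.Theory.
Local Open Scope ring_scope.

Lemma count_enum_sum m (S : {set 'I_m}) (P : pred 'I_m) :
  count P (enum S) = (\sum_(u in S) nat_of_bool (P u))%N.
Proof. by rewrite -sumn_count sumnE big_map big_enum. Qed.

Definition cnt m (F : {set 'I_m}) (P : pred 'I_m) := (\sum_(u in F) nat_of_bool (P u))%N.
Arguments cnt {m}.

Lemma rnk_key m (v : 'I_m) (S : {set 'I_m}) s : v \notin S -> s \in S ->
  rnk v S (key s) = (2 * (v < s) + cnt S (fun u => (u < s)%N))%N.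
Proof.
move=> hv hs; rewrite /rnk /ext /= count_map count_enum_sum.
have svne : (s : nat) != v by apply/eqP => /val_inj E; move: hs; rewrite E (negbTE hv).
have -> : (xkey v < key s)%N = (v < s)%N by rewrite /xkey /key; apply/idP/idP; lia.
have -> : (ykey v < key s)%N = (v < s)%N by rewrite /ykey /key; apply/idP/idP; lia.
rewrite /cnt addnA addnn -mul2n; congr (_ + _)%N; apply: eq_bigr => u _ /=.
by rewrite /key; congr nat_of_bool; apply/idP/idP; lia.
Qed.

Lemma rnk_x m (v : 'I_m) (S : {set 'I_m}) : v \notin S ->
  rnk v S (xkey v) = cnt S (fun u => (u < v)%N).
Proof.
move=> hv; rewrite /rnk /ext /= count_map count_enum_sum ltnn.
have -> : (ykey v < xkey v)%N = false by rewrite /ykey /xkey; apply/idP; lia.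
rewrite /cnt /=; apply: eq_bigr => u _ /=.
by rewrite /key /xkey; congr nat_of_bool; apply/idP/idP; lia.
Qed.

Lemma rnk_y m (v : 'I_m) (S : {set 'I_m}) : v \notin S ->
  rnk v S (ykey v) = (1 + cnt S (fun u => (u < v)%N))%N.
Proof.
move=> hv; rewrite /rnk /ext /= count_map count_enum_sum ltnn.
have -> : (xkey v < ykey v)%N = true by rewrite /ykey /xkey; apply/idP; lia.
rewrite /cnt /=; congr (_ + _)%N; apply: eq_bigr => u hu /=.
have uv : (u : nat) != v by apply/eqP => /val_inj E; move: hu; rewrite E (negbTE hv).
by rewrite /key /ykey; congr nat_of_bool; apply/idP/idP; lia.
Qed.

Lemma par_common m (v s : 'I_m) (F : {set 'I_m}) : s \notin F -> v \notin s |: F ->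
  [/\ odd (rnk v (s |: F) (key s)) = odd (cnt F (fun u => (u < s)%N)),
      odd (rnk v (s |: F) (xkey v)) = odd (s < v)%N (+) odd (cnt F (fun u => (u < v)%N)) &
      odd (rnk v (s |: F) (ykey v)) = ~~ (odd (s < v)%N (+) odd (cnt F (fun u => (u < v)%N)))].
Proof.
move=> sF vS.
have sS : s \in s |: F by rewrite setU11.
rewrite rnk_key // rnk_x // rnk_y // /cnt !big_setU1 //= ltnn add0n.
rewrite !oddD !oddb /=; split => //; by case: (v < s)%N.
Qed.

Lemma par_lower m (v s : 'I_m) (F : {set 'I_m}) : s \notin F -> v \notin s |: F ->
  odd (rnk v (s |: F) (key s)) == odd (rnk v (s |: F) (ykey v)) ->
  odd (cnt F (fun u => (u < s)%N) + (s < v)%N)%N = ~~ odd (cnt F (fun u => (u < v)%N)).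
Proof.
move=> sF vS; case: (par_common sF vS) => -> _ ->; rewrite oddD.
by case: (odd (cnt F _)); case: (odd (nat_of_bool _)); case: (odd (cnt F _)).
Qed.

Lemma par_upper m (v s : 'I_m) (F : {set 'I_m}) : s \notin F -> v \notin s |: F ->
  odd (rnk v (s |: F) (key s)) == odd (rnk v (s |: F) (xkey v)) ->
  odd (cnt F (fun u => (u < s)%N) + (s < v)%N)%N = odd (cnt F (fun u => (u < v)%N)).
Proof.
move=> sF vS; case: (par_common sF vS) => -> -> _; rewrite oddD.
by case: (odd (cnt F _)); case: (odd (nat_of_bool _)); case: (odd (cnt F _)).
Qed.

Lemma final (K : realFieldType) m (t : 'I_m -> K) (ht : forall i j : 'I_m, (i < j)%N -> t i < t j)
  d (T : {set {set 'I_m}}) (hT : triangulation d t T) (F : {set 'I_m}) (s r v : 'I_m) :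
  (v |: (s |: F)) \in T -> (v |: (r |: F)) \in T ->
  s \notin F -> r \notin F -> v \notin F -> s != r -> s != v -> r != v -> #|F| = (2 * d)%N ->
  odd (cnt F (fun u => (u < s)%N) + (s < v)%N)%N = odd (cnt F (fun u => (u < r)%N) + (r < v)%N)%N ->
  False.
Proof.
move=> hA hB sF rF vF sr sv rv hF hp.
have ltt a j : (t a < t j) = (a < j)%N.
  have [h|h|h] := ltngtP a j.
  - by rewrite (ht _ _ h).
  - by rewrite lt_gtF // ht.
  - by rewrite (val_inj h) ltxx.
have tinj : injective t.
  move=> i j E; apply/val_inj; have [h|h|h] := ltngtP i j => //.
    by move: (ht _ _ h); rewrite E ltxx.
  by move: (ht _ _ h); rewrite E ltxx.
have sgn a : a \notin F -> a != v ->
    0 < (-1) ^+ ((a < v)%N + \sum_(j in F) nat_of_bool (a < j)%N)%N * \prod_(j in v |: F) (t a - t j).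
  move=> aF av.
  have := @prod_sign K m (v |: F) (fun j => t a - t j) _.
  rewrite big_setU1 //= subr_lt0 ltt.
  under eq_bigr => j _ do rewrite subr_lt0 ltt.
  apply.
  move=> j hj; rewrite subr_eq0; apply/eqP => /tinj E.
  by move: hj; rewrite -E !inE (negbTE aF) (negbTE av).
have cpar a : a \notin F -> odd (\sum_(j in F) nat_of_bool (a < j)%N) = odd (cnt F (fun u => (u < a)%N)).
  move=> aF.
  have E : (\sum_(j in F) nat_of_bool (a < j)%N + cnt F (fun u => (u < a)%N))%N = #|F|.
    rewrite /cnt -big_split -sum1_card; apply: eq_bigr => j hj /=.
    have [h|h|h] := ltngtP a j => //.
    by move: hj; rewrite -(val_inj h) (negbTE aF).
  have := congr1 odd E; rewrite oddD hF oddM /=.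
  by case: (odd (\sum_(j in F) _)); case: (odd (cnt F _)).
have hs := sgn s sF sv; have hr := sgn r rF rv.
have esr : (-1) ^+ ((s < v)%N + \sum_(j in F) nat_of_bool (s < j)%N)%N =
           (-1) ^+ ((r < v)%N + \sum_(j in F) nat_of_bool (r < j)%N)%N :> K.
  rewrite -signr_odd -[RHS]signr_odd; congr (_ ^+ nat_of_bool _).
  rewrite !oddD (cpar s sF) (cpar r rF); rewrite !oddD in hp.
  by rewrite addbC hp addbC.
apply: (@key_geom K m t tinj d T hT F s r v) => //.
have := mulr_gt0 hs hr; rewrite esr mulrACA -exprD addnn -mul2n exprM sqrrN !expr1n mul1r.
by [].
Qed.

Theorem lemma4p13 (K : realFieldType) (d m : nat) (t : 'I_m -> K)
  (ht : forall i j : 'I_m, (i < j)%N -> t i < t j)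
  (T : {set {set 'I_m}}) (hT : triangulation d t T)
  (v : 'I_m) (S R : {set 'I_m})
  (hS : S \in link T v) (hR : R \in link T v)
  (hSR : #|S :&: R| = (2 * d)%N) :
  ~ (lower_facet v S (S :&: R) /\ lower_facet v R (S :&: R)) /\
  ~ (upper_facet v S (S :&: R) /\ upper_facet v R (S :&: R)).
Proof.
case/imsetP: hS => A; rewrite inE => /andP[hA hvA] ES.
case/imsetP: hR => B; rewrite inE => /andP[hB hvB] ER.
have vS : v \notin S by rewrite ES !inE eqxx.
have vR : v \notin R by rewrite ER !inE eqxx.
have EA : A = v |: S by rewrite ES setD1K.
have EB : B = v |: R by rewrite ER setD1K.
rewrite EA in hA; rewrite EB in hB.
set F := S :&: R in hSR *.
have prepS s : s \in S -> F = S :\ s -> S = s |: F /\ s \notin F.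
  by move=> hs EF; rewrite EF setD1K // !inE eqxx.
have prepR r : r \in R -> F = R :\ r -> R = r |: F /\ r \notin F.
  by move=> hr EF; rewrite EF setD1K // !inE eqxx.
have core s r : s \in S -> r \in R -> F = S :\ s -> F = R :\ r ->
    odd (cnt F (fun u => (u < s)%N) + (s < v)%N)%N = odd (cnt F (fun u => (u < r)%N) + (r < v)%N)%N ->
    False.
  move=> hs hr EFs EFr hp.
  have [ES' sF] := prepS s hs EFs; have [ER' rF] := prepR r hr EFr.
  have sR : s \notin R.
    apply/negP => h; have : s \in F by rewrite /F inE hs h.
    by rewrite (negbTE sF).
  have sr : s != r by apply/eqP => E; move: sR; rewrite E hr.
  have sv : s != v by apply/eqP => E; move: vS; rewrite -E hs.
  have rv : r != v by apply/eqP => E; move: vR; rewrite -E hr.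
  have vF : v \notin F by rewrite /F inE (negbTE vS).
  apply: (final ht hT _ _ sF rF vF sr sv rv hSR hp).
    by rewrite -ES'.
  by rewrite -ER'.
split.
- case=> [[s hs EFs] [r hr EFr]].
  move: hs hr; rewrite !inE => /andP[hs ps] /andP[hr pr].
  apply: (core s r hs hr EFs EFr).
  have [ES' sF] := prepS s hs EFs; have [ER' rF] := prepR r hr EFr.
  rewrite ES' in ps vS; rewrite ER' in pr vR.
  by rewrite (par_lower sF vS ps) (par_lower rF vR pr).
- case=> [[s hs EFs] [r hr EFr]].
  move: hs hr; rewrite !inE => /andP[hs ps] /andP[hr pr].
  apply: (core s r hs hr EFs EFr).
  have [ES' sF] := prepS s hs EFs; have [ER' rF] := prepR r hr EFr.
  rewrite ES' in ps vS; rewrite ER' in pr vR.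
  by rewrite (par_upper sF vS ps) (par_upper rF vR pr).
Qed.
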